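(* Let $H_1,H_2$ be complex Hilbert spaces and let $T$ be a densely defined closed operator from $H_1$ to $H_2$. Then for each $\epsilon>0$ there exists $S\in\mathcal B(H_1,H_2)$ with $\|S\|\leq\epsilon$ such that $S+T$ (with domain $D(T)$) is minimum attaining and $\theta(S+T,T)\leq\epsilon$. Moreover, if $m(T)>0$, then $S$ can be chosen to be a rank one operator.
   Context: Hilbert spaces are complex and infinite dimensional. For a densely defined closed operator $A$ with domain $D(A)$, the minimum modulus is $m(A)=\inf\{\|Ax\|: x\in D(A),\ \|x\|=1\}$, and $A$ is called minimum attaining if there exists $x_0\in D(A)$ with $\|x_0\|=1$ and $\|Ax_0\|=m(A)$. The graph of $A$ is $G(A)=\{(Ax,x):x\in D(A)\}$; the gap between densely defined closed operators $A,B$ is $\theta(A,B)=\|P_{G(A)}-P_{G(B)}\|$, where $P_M$ is the orthogonal projection onto the closed subspace $M$. *)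

(* Defs.v *)
From HB Require Import structures.
From mathcomp Require Import all_boot all_order all_algebra.
From mathcomp Require Import complex.
From mathcomp Require Import boolp classical_sets reals.

Set Implicit Arguments.
Unset Strict Implicit.
Unset Printing Implicit Defensive.

Import Order.TTheory GRing.Theory Num.Theory.
Local Open Scope ring_scope.
Local Open Scope classical_set_scope.

Record hilbert (R : realType) := Hilbert {
  hcar :> lmodType R[i];
  hdot : hcar -> hcar -> R[i];
  hdotDl : forall (a : R[i]) (x y z : hcar),
      hdot (a *: x + y) z = a * hdot x z + hdot y z;
  hdotC : forall x y : hcar, hdot y x = (hdot x y)^*;
  hdot_ge0 : forall x : hcar, 0 <= hdot x x;
  hdot_eq0 : forall x : hcar, hdot x x = 0 -> x = 0;
  hcomplete : forall u : nat -> hcar,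
      (forall e : R, 0 < e -> exists N : nat, forall m n : nat, (N <= m)%N -> (N <= n)%N ->
         Num.sqrt (complex.Re (hdot (u m - u n) (u m - u n))) < e) ->
      exists l : hcar, forall e : R, 0 < e -> exists N : nat, forall n : nat, (N <= n)%N ->
         Num.sqrt (complex.Re (hdot (u n - l) (u n - l))) < e
}.

Section Defs.
Variable R : realType.

Definition hnorm (H : hilbert R) (x : H) : R := Num.sqrt (complex.Re (hdot x x)).

Definition infinite_dimensional (H : hilbert R) : Prop :=
  forall n : nat, exists f : 'I_n -> H,
    forall c : 'I_n -> R[i], \sum_(i < n) c i *: f i = 0 -> forall i, c i = 0.

Definition hcvg (H : hilbert R) (u : nat -> H) (l : H) : Prop :=
  forall e : R, 0 < e -> exists N : nat, forall n : nat, (N <= n)%N -> hnorm (u n - l) < e.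

Variables H1 H2 : hilbert R.

Definition linear_subspace (D : set H1) : Prop :=
  D 0 /\ forall (a : R[i]) (x y : H1), D x -> D y -> D (a *: x + y).

Definition linear_on (D : set H1) (T : H1 -> H2) : Prop :=
  forall (a : R[i]) (x y : H1), D x -> D y -> T (a *: x + y) = a *: T x + T y.

Definition dense_in (D : set H1) : Prop :=
  forall (x : H1) (e : R), 0 < e -> exists d : H1, D d /\ hnorm (x - d) < e.

Definition closed_operator (D : set H1) (T : H1 -> H2) : Prop :=
  forall (u : nat -> H1) (x : H1) (y : H2),
    (forall n, D (u n)) -> hcvg u x -> hcvg (fun n => T (u n)) y -> D x /\ T x = y.

Definition densely_defined_closed (D : set H1) (T : H1 -> H2) : Prop :=
  [/\ linear_subspace D, linear_on D T, dense_in D & closed_operator D T].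

Definition bounded_operator (S : H1 -> H2) : Prop :=
  (forall (a : R[i]) (x y : H1), S (a *: x + y) = a *: S x + S y) /\
  exists M : R, forall x : H1, hnorm (S x) <= M * hnorm x.

Definition op_norm (S : H1 -> H2) : R :=
  sup [set r : R | exists x : H1, hnorm x <= 1 /\ r = hnorm (S x)].

Definition rank_one (S : H1 -> H2) : Prop :=
  exists v : H2, v <> 0 /\ (forall x : H1, exists c : R[i], S x = c *: v) /\
                 exists x : H1, S x <> 0.

Definition min_modulus (D : set H1) (A : H1 -> H2) : R :=
  inf [set r : R | exists x : H1, D x /\ hnorm x = 1 /\ r = hnorm (A x)].

Definition minimum_attaining (D : set H1) (A : H1 -> H2) : Prop :=
  exists x0 : H1, D x0 /\ hnorm x0 = 1 /\ hnorm (A x0) = min_modulus D A.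

Definition dot21 (z w : H2 * H1) : R[i] := hdot z.1 w.1 + hdot z.2 w.2.
Definition norm21 (z : H2 * H1) : R := Num.sqrt (hnorm z.1 ^+ 2 + hnorm z.2 ^+ 2).
Definition sub21 (z w : H2 * H1) : H2 * H1 := (z.1 - w.1, z.2 - w.2).

Definition graph (D : set H1) (A : H1 -> H2) : set (H2 * H1) :=
  [set w | exists x : H1, D x /\ w = (A x, x)].

Definition is_orth_proj (M : set (H2 * H1)) (z p : H2 * H1) : Prop :=
  M p /\ forall w, M w -> dot21 (sub21 z p) w = 0.

(* gap theta(A,B) = || P_G(A) - P_G(B) || *)
Definition gap (DA : set H1) (A : H1 -> H2) (DB : set H1) (B : H1 -> H2) : R :=
  sup [set r : R | exists z p q : H2 * H1,
        [/\ norm21 z <= 1, is_orth_proj (graph DA A) z p,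
            is_orth_proj (graph DB B) z q & r = norm21 (sub21 p q)]].

End Defs.

(* Main.v *)
Require Import Defs.
From HB Require Import structures.
From mathcomp Require Import all_boot all_order all_algebra.
From mathcomp Require Import complex.
From mathcomp Require Import boolp classical_sets reals.
From mathcomp Require Import ring lra zify.
Import Order.TTheory GRing.Theory Num.Theory.
Local Open Scope ring_scope.
Local Open Scope classical_set_scope.
Section Cplx.
Context {R : realType}.
Local Open Scope complex_scope. Local Open Scope ring_scope.
Implicit Types x y : R[i].
Lemma Re_conj x : complex.Re (x^*) = complex.Re x.
Proof. by case: x. Qed.
Lemma Im_conj x : complex.Im (x^*) = - complex.Im x.
Proof. by case: x. Qed.
Lemma ReD x y : complex.Re (x + y) = complex.Re x + complex.Re y.
Proof. by case: x; case: y. Qed.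
Lemma ImD x y : complex.Im (x + y) = complex.Im x + complex.Im y.
Proof. by case: x; case: y. Qed.
Lemma ReN x : complex.Re (- x) = - complex.Re x.
Proof. by case: x. Qed.
Lemma ReB x y : complex.Re (x - y) = complex.Re x - complex.Re y.
Proof. by rewrite ReD ReN. Qed.
Lemma ReM x y : complex.Re (x * y) = complex.Re x * complex.Re y - complex.Im x * complex.Im y.
Proof. by case: x => a b; case: y => c d. Qed.
Lemma ReC (k : R) : complex.Re (k%:C) = k.
Proof. by []. Qed.
Lemma ImC (k : R) : complex.Im (k%:C) = 0.
Proof. by []. Qed.
Lemma Re0 : complex.Re (0 : R[i]) = 0. Proof. by []. Qed.
Lemma Re1 : complex.Re (1 : R[i]) = 1. Proof. by []. Qed.
Lemma ReCM (k : R) x : complex.Re (k%:C * x) = k * complex.Re x.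
Proof. by rewrite ReM ReC ImC mul0r subr0. Qed.
Definition nc x : R := complex.Re x ^+ 2 + complex.Im x ^+ 2.
Lemma nc_ge0 x : 0 <= nc x.
Proof. by rewrite /nc addr_ge0 // sqr_ge0. Qed.
Lemma mul_conj x : x * x^* = (nc x)%:C.
Proof. case: x => a b; rewrite /nc /=; apply/eqP; rewrite eq_complex /=; apply/andP; split; apply/eqP.
  by rewrite -!expr2 mulrN opprK. by rewrite mulrN mulrC addNr. Qed.
Lemma ReMconj x : complex.Re (x * x^*) = nc x.
Proof. by rewrite mul_conj. Qed.
Lemma ReMconjl x : complex.Re (x^* * x) = nc x.
Proof. by rewrite mulrC mul_conj. Qed.
Lemma nc_eq0 x : nc x = 0 -> x = 0.
Proof. case: x => a b; rewrite /nc /= => H.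
  have Ha : a ^+ 2 = 0.
    apply/eqP; rewrite eq_le sqr_ge0 andbT -H lerDl sqr_ge0 //.
  have Hb : b ^+ 2 = 0 by rewrite Ha add0r in H.
  move/eqP: Ha; rewrite sqrf_eq0 => /eqP ->; move/eqP: Hb; rewrite sqrf_eq0 => /eqP -> //.
Qed.
Lemma ncC (k : R) : nc (k%:C) = k ^+ 2.
Proof. by rewrite /nc /= expr0n /= addr0. Qed.
Lemma conjC_real (k : R) : (k%:C)^* = k%:C.
Proof. by apply/eqP; rewrite eq_complex /= ?oppr0 !eqxx. Qed.
Lemma ncM x y : nc (x * y) = nc x * nc y.
Proof. case: x => a b; case: y => c d; rewrite /nc /=. ring. Qed.
Lemma nc_conj x : nc (x^*) = nc x.
Proof. by rewrite /nc Re_conj Im_conj sqrrN. Qed.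
Lemma conj_rM (t : R) x : (t%:C * x)^* = t%:C * x^*.
Proof. rewrite rmorphM; congr (_ * _); exact: conjC_real. Qed.
End Cplx.
Section Hb.
Context {R : realType}.
Local Open Scope complex_scope. Local Open Scope ring_scope.
Context {H : hilbert R}.
Implicit Types x y z : H.

Lemma dotDl x y z : hdot (x + y) z = hdot x z + hdot y z.
Proof. by rewrite -(scale1r x) hdotDl mul1r scale1r. Qed.
Lemma dot0l z : hdot (0 : H) z = 0.
Proof.
have h := dotDl 0 0 z; rewrite addr0 in h; apply: (addrI (hdot 0 z)); by rewrite addr0 -h.
Qed.
Lemma dotZl (a : R[i]) x z : hdot (a *: x) z = a * hdot x z.
Proof. by rewrite -(addr0 (a *: x)) hdotDl dot0l addr0. Qed.
Lemma dotNl x z : hdot (- x) z = - hdot x z.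
Proof. by rewrite -scaleN1r dotZl mulN1r. Qed.
Lemma dotBl x y z : hdot (x - y) z = hdot x z - hdot y z.
Proof. by rewrite dotDl dotNl. Qed.
Lemma dotDr x y z : hdot z (x + y) = hdot z x + hdot z y.
Proof. by rewrite !(hdotC _ z) dotDl rmorphD. Qed.
Lemma dotZr (a : R[i]) x z : hdot z (a *: x) = a^* * hdot z x.
Proof. by rewrite !(hdotC _ z) dotZl rmorphM. Qed.
Lemma dot0r z : hdot z (0 : H) = 0.
Proof. by rewrite hdotC dot0l rmorph0. Qed.
Lemma dotNr x z : hdot z (- x) = - hdot z x.
Proof. by rewrite !(hdotC _ z) dotNl rmorphN. Qed.
Lemma dotBr x y z : hdot z (x - y) = hdot z x - hdot z y.
Proof. by rewrite dotDr dotNr. Qed.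
Lemma Re_dotC x y : complex.Re (hdot y x) = complex.Re (hdot x y).
Proof. by rewrite hdotC Re_conj. Qed.

Lemma Re_dot_ge0 x : 0 <= complex.Re (hdot x x).
Proof. by have := hdot_ge0 x; rewrite lecE => /andP[_]. Qed.
Lemma Im_dot x : complex.Im (hdot x x) = 0.
Proof. by have := hdot_ge0 x; rewrite lecE => /andP[/eqP -> _]. Qed.
Lemma hnorm2 x : hnorm x ^+ 2 = complex.Re (hdot x x).
Proof. by rewrite /hnorm sqr_sqrtr // Re_dot_ge0. Qed.
Lemma dotxx x : hdot x x = (hnorm x ^+ 2)%:C.
Proof. rewrite hnorm2; move: (Im_dot x); case: (hdot x x) => a b /= -> //. Qed.
Lemma hnorm_ge0 x : 0 <= hnorm x.
Proof. exact: sqrtr_ge0. Qed.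
Lemma hnorm0 : hnorm (0 : H) = 0.
Proof. by rewrite /hnorm dot0l /= sqrtr0. Qed.
Lemma hnorm_eq0 x : hnorm x = 0 -> x = 0.
Proof. move=> h; apply: hdot_eq0; by rewrite dotxx h expr0n. Qed.
Lemma hnorm2_eq0 x : hnorm x ^+ 2 = 0 -> x = 0.
Proof. by move/eqP; rewrite sqrf_eq0 => /eqP; apply: hnorm_eq0. Qed.

Lemma normD2 x y : hnorm (x + y) ^+ 2 = hnorm x ^+ 2 + 2 * complex.Re (hdot x y) + hnorm y ^+ 2.
Proof.
rewrite !hnorm2 dotDl !dotDr !ReD (Re_dotC x y). ring.
Qed.
Lemma normB2 x y : hnorm (x - y) ^+ 2 = hnorm x ^+ 2 - 2 * complex.Re (hdot x y) + hnorm y ^+ 2.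
Proof.
rewrite !hnorm2 dotDl !dotDr !dotNl !dotNr opprK !ReD !ReN (Re_dotC x y). ring.
Qed.
Lemma normZ2 (a : R[i]) x : hnorm (a *: x) ^+ 2 = nc a * hnorm x ^+ 2.
Proof. by rewrite !hnorm2 dotZl dotZr mulrA mul_conj ReCM. Qed.
Lemma normN x : hnorm (- x) = hnorm x.
Proof. by rewrite /hnorm dotNl dotNr opprK. Qed.
Lemma normBC x y : hnorm (x - y) = hnorm (y - x).
Proof. by rewrite -normN opprB. Qed.

Lemma sq_le (a b : R) : 0 <= a -> 0 <= b -> a ^+ 2 <= b ^+ 2 -> a <= b.
Proof. by move=> ha hb; rewrite ler_sqr ?nnegrE. Qed.
Lemma sq_lt (a b : R) : 0 <= a -> 0 <= b -> a ^+ 2 < b ^+ 2 -> a < b.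
Proof. by move=> ha hb; rewrite ltr_sqr ?nnegrE. Qed.

Lemma sq_eq (a b : R) : 0 <= a -> 0 <= b -> a ^+ 2 = b ^+ 2 -> a = b.
Proof. move=> ha hb h; apply/le_anti/andP; split; apply: sq_le; rewrite ?h //. Qed.

Lemma CS_Re x y : complex.Re (hdot x y) <= hnorm x * hnorm y.
Proof.
have [hy|hy] := eqVneq (hnorm y) 0.
  by rewrite (hnorm_eq0 _ hy) dot0r hnorm0 mulr0.
set r := complex.Re (hdot x y).
have hy2 : 0 < hnorm y ^+ 2 by rewrite exprn_gt0 // lt_def hy hnorm_ge0.
have key := normB2 x ((r / hnorm y ^+ 2)%:C *: y).
have h0 : 0 <= hnorm (x - (r / hnorm y ^+ 2)%:C *: y) ^+ 2 by exact: sqr_ge0.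
rewrite key dotZr conjC_real ReCM normZ2 ncC in h0.
have [hr|hr] := lerP r 0.
  by apply: le_trans hr _; rewrite mulr_ge0 // hnorm_ge0.
apply: sq_le; first exact: ltW.
  by rewrite mulr_ge0 // hnorm_ge0.
have e : r ^+ 2 = (hnorm x ^+ 2 - (hnorm x ^+ 2 - 2 * (r / hnorm y ^+ 2 * r) + (r / hnorm y ^+ 2) ^+ 2 * hnorm y ^+ 2)) * hnorm y ^+ 2.
  by field.
rewrite e [X in _ <= X]exprMn ler_pM2r // lerBlDr lerDl; exact: h0.
Qed.

Lemma CS_Re_abs x y : `|complex.Re (hdot x y)| <= hnorm x * hnorm y.
Proof.
rewrite ler_norml CS_Re andbT lerNl -ReN -dotNr -(normN y) CS_Re //.
Qed.

Lemma hnorm_tri x y : hnorm (x + y) <= hnorm x + hnorm y.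
Proof.
apply: sq_le; rewrite ?addr_ge0 ?hnorm_ge0 //.
rewrite normD2 sqrrD lerD2r lerD2l mulr2n; have := CS_Re x y; lra.
Qed.

Lemma hnorm_sub_tri x y z : hnorm (x - z) <= hnorm (x - y) + hnorm (y - z).
Proof. by have := hnorm_tri (x - y) (y - z); rewrite addrA subrK. Qed.

Lemma normZ (a : R[i]) x : hnorm (a *: x) = Num.sqrt (nc a) * hnorm x.
Proof.
by rewrite /hnorm dotZl dotZr mulrA mul_conj ReCM sqrtrM ?nc_ge0.
Qed.
Lemma normZr (k : R) x : hnorm (k%:C *: x) = `|k| * hnorm x.
Proof. by rewrite normZ ncC sqrtr_sqr. Qed.

Lemma CS x y : nc (hdot x y) <= hnorm x ^+ 2 * hnorm y ^+ 2.
Proof.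
set c := hdot x y.
have h : nc c <= Num.sqrt (nc c) * hnorm x * hnorm y.
  have := CS_Re ((c^*) *: x) y. by rewrite dotZl ReMconjl normZ nc_conj.
have [h0|h0] := eqVneq (nc c) 0.
  by rewrite h0 mulr_ge0 // sqr_ge0.
have hp : 0 < Num.sqrt (nc c) by rewrite sqrtr_gt0 lt_def h0 nc_ge0.
rewrite -(sqr_sqrtr (nc_ge0 c)) -exprMn.
have h2 : Num.sqrt (nc c) <= hnorm x * hnorm y.
  rewrite -(ler_pM2l hp) mulrA -expr2 sqr_sqrtr ?nc_ge0 //.
by rewrite ler_sqr ?nnegrE ?sqrtr_ge0 ?mulr_ge0 ?hnorm_ge0.
Qed.
End Hb.
Section Proj.
Context {R : realType}.
Local Open Scope complex_scope. Local Open Scope ring_scope.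
Context {H : hilbert R}.
Implicit Types x y z : H.

Lemma small_inv (c : R) : 0 < c -> exists N : nat, forall n, (N <= n)%N -> ((n.+1)%:R)^-1 < c.
Proof.
move=> hc.
have [N hN] : exists N : nat, c^-1 < N%:R.
  by exists (Num.Def.archi_bound c^-1); apply: archi_boundP; rewrite invr_ge0 ltW.
exists N => n hn.
rewrite invf_plt ?posrE ?ltr0Sn //.
apply: (lt_le_trans hN); rewrite ler_nat; lia.
Qed.

Lemma half2 : (2^-1 : R[i]) + 2^-1 = 1.
Proof. by field. Qed.

Lemma norm_dbl x : hnorm (x + x) = 2 * hnorm x.
Proof.
apply: sq_eq; rewrite ?mulr_ge0 ?hnorm_ge0 //.
rewrite normD2 -hnorm2 exprMn; ring.
Qed.

Lemma parallelogram x y : hnorm (x - y) ^+ 2 + hnorm (x + y) ^+ 2 = 2 * hnorm x ^+ 2 + 2 * hnorm y ^+ 2.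
Proof. rewrite normB2 normD2. ring. Qed.

Lemma proj_thm (M : set H) (z : H) : M 0 ->
  (forall (a : R[i]) u v, M u -> M v -> M (a *: u + v)) ->
  exists p, (forall e, 0 < e -> exists u, M u /\ hnorm (p - u) < e) /\
            (forall u, M u -> hdot (z - p) u = 0).
Proof.
move=> M0 Mlin.
set E := [set r | exists u, M u /\ r = hnorm (z - u)].
have E0 : E !=set0 by exists (hnorm (z - 0)); exists 0.
have Elb : has_lbound E by exists 0 => r [u [_ ->]]; exact: hnorm_ge0.
set d := inf E.
have d_lb : forall u, M u -> d <= hnorm (z - u).
  by move=> u Mu; apply: (ge_inf Elb); exists u.
have d_ge0 : 0 <= d by apply: lb_le_inf => // r [u [_ ->]]; exact: hnorm_ge0.
have seq_ex : forall n : nat, exists u, M u /\ hnorm (z - u) ^+ 2 < d ^+ 2 + ((n.+1)%:R)^-1.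
  move=> n.
  have hlt : inf E < Num.sqrt (d ^+ 2 + ((n.+1)%:R)^-1).
    apply: sq_lt => //; first exact: sqrtr_ge0.
    by rewrite sqr_sqrtr ?addr_ge0 ?sqr_ge0 ?invr_ge0 ?ler0n // ltrDl invr_gt0 ltr0Sn.
  have [r [u [Mu ->]] hr] := inf_lt E0 hlt.
  exists u; split => //.
  rewrite -(sqr_sqrtr (a := d ^+ 2 + _)) ?addr_ge0 ?sqr_ge0 ?invr_ge0 ?ler0n //.
  by rewrite ltr_sqr ?nnegrE ?hnorm_ge0 ?sqrtr_ge0.
have [u hu] := choice seq_ex.
have cauchy : forall n k, hnorm (u n - u k) ^+ 2 <= 2 * ((n.+1)%:R)^-1 + 2 * ((k.+1)%:R)^-1.
  move=> n k.
  have [Mn hn] := hu n; have [Mk hk] := hu k.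
  set mid := (2^-1 : R[i]) *: (u n + u k).
  have Mmid : M mid by rewrite /mid scalerDr; apply: (Mlin) => //; rewrite -[X in M X]addr0; apply: (Mlin).
  have hm := d_lb _ Mmid.
  have e1 : (z - u k) - (z - u n) = u n - u k by rewrite opprB addrC addrA subrK.
  have e2 : (z - u k) + (z - u n) = (z - mid) + (z - mid).
    by rewrite /mid [RHS]addrACA -opprD -scalerDl half2 scale1r addrACA -opprD [u k + _]addrC.
  have := parallelogram (z - u k) (z - u n).
  rewrite e1 e2 norm_dbl => hp.
  have hm2 : d ^+ 2 <= hnorm (z - mid) ^+ 2 by rewrite ler_sqr ?nnegrE ?hnorm_ge0.
  have : hnorm (u n - u k) ^+ 2 = 2 * hnorm (z - u k) ^+ 2 + 2 * hnorm (z - u n) ^+ 2 - (2 * hnorm (z - mid)) ^+ 2.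
    by rewrite -hp addrK.
  move=> ->.
  have h4 : (2 * hnorm (z - mid)) ^+ 2 = 4%:R * hnorm (z - mid) ^+ 2 by ring.
  rewrite h4; move: hn hk; move: (n.+1%:R^-1) (k.+1%:R^-1) => a b; lra.
have [p hp] : exists p, hcvg u p.
  apply: (@hcomplete R H u) => e he.
  have [N hN] := small_inv (e ^+ 2 / 4%:R) (divr_gt0 (exprn_gt0 2 he) (ltr0n _ 4)).
  exists N => m n hm hn.
  apply: sq_lt; rewrite ?sqrtr_ge0 ?ltW //.
  have := cauchy m n; have := hN _ hm; have := hN _ hn.
  move: (m.+1%:R^-1) (n.+1%:R^-1) => a b.
  rewrite -/(hnorm _); lra.
exists p; split.
  move=> e he; have [N hN] := hp e he; exists (u N); split; first by case: (hu N).
  by rewrite normBC; apply: hN.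
have zp_le : hnorm (z - p) <= d.
  apply/ler_addgt0Pr => e he.
  have he2 : 0 < e / 2%:R by rewrite divr_gt0.
  have [N1 hN1] := hp _ he2.
  have [N2 hN2] := small_inv (e ^+ 2 / 4%:R) (divr_gt0 (exprn_gt0 2 he) (ltr0n _ 4)).
  have hn1 := hN1 (maxn N1 N2) (leq_maxl _ _).
  have hn2 := hN2 (maxn N1 N2) (leq_maxr _ _).
  have [_ hz] := hu (maxn N1 N2).
  have hzu : hnorm (z - u (maxn N1 N2)) < d + e / 2%:R.
    apply: sq_lt; [exact: hnorm_ge0 | by rewrite addr_ge0 // ltW |].
    apply: (lt_le_trans hz); move: hn2; move: ((maxn N1 N2).+1%:R^-1) => a ha.
    have hde : 0 <= d * e by rewrite mulr_ge0 // ltW.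
    nra.
  have := hnorm_sub_tri z (u (maxn N1 N2)) p.
  lra.
have zp_min : forall (a : R[i]) w, M w -> hnorm (z - p) <= hnorm (z - p - a *: w).
  move=> a w Mw.
  apply: (le_trans zp_le).
  apply/ler_addgt0Pr => e he.
  have [N hN] := hp e he.
  have h1 := d_lb _ (Mlin a _ _ Mw (hu N).1).
  have h2 := hN N (leqnn N).
  have e3 : z - (a *: w + u N) = (z - p - a *: w) + (p - u N).
    by rewrite [RHS]addrA [z - p - _]addrAC subrK opprD addrA.
  have := hnorm_tri (z - p - a *: w) (p - u N).
  rewrite -e3 normBC. lra.
move=> w Mw.
set v := z - p; set c := hdot v w.
have hnc : nc c <= 0.
  set t := (hnorm w ^+ 2 + 1)^-1.
  have hpos : 0 < hnorm w ^+ 2 + 1 by apply: ltr_wpDl (sqr_ge0 _) ltr01.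
  have ht : 0 < t by rewrite invr_gt0.
  have htw : t * hnorm w ^+ 2 < 1.
    by rewrite /t mulrC ltr_pdivrMr // mul1r ltrDl.
  have := zp_min (t%:C * c) w Mw.
  rewrite -/v => h.
  have h2 : hnorm v ^+ 2 <= hnorm (v - (t%:C * c) *: w) ^+ 2.
    by rewrite ler_sqr ?nnegrE ?hnorm_ge0.
  rewrite [X in _ <= X]normB2 normZ2 dotZr conj_rM -mulrA ReCM ReMconjl ncM ncC in h2.
  have hc := nc_ge0 c.
  have : t * (2 * nc c) <= t * (t * hnorm w ^+ 2 * nc c).
    nra.
  rewrite ler_pM2l // => h3.
  nra.
by apply: nc_eq0; apply/eqP; rewrite eq_le hnc nc_ge0.
Qed.
End Proj.
Section Gap.
Context {R : realType}.
Local Open Scope complex_scope. Local Open Scope ring_scope.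
Context {H1 H2 : hilbert R}.

Lemma dot_ident {H : hilbert R} (z P Q : H) :
  hdot (P - Q) (P - Q) = hdot (z - Q) P + hdot (z - P) Q - hdot (z - P) P - hdot (z - Q) Q.
Proof. rewrite !dotBl !dotBr. ring. Qed.

Lemma norm21_sq (u : H2 * H1) : norm21 u ^+ 2 = hnorm u.1 ^+ 2 + hnorm u.2 ^+ 2.
Proof. by rewrite /norm21 sqr_sqrtr // addr_ge0 // sqr_ge0. Qed.

Lemma gap_sq (D : set H1) (S T : H1 -> H2) (c : R) :
  0 <= c -> (forall x, hnorm (S x) <= c * hnorm x) ->
  forall z p q, norm21 z <= 1 -> is_orth_proj (graph D (fun x => S x + T x)) z p ->
     is_orth_proj (graph D T) z q -> norm21 (sub21 p q) ^+ 2 <= 2 * c.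
Proof.
move=> hc hS [z1 z2] p q hz [[x [Dx ->]] oA] [[y [Dy ->]] oT].
rewrite /sub21 /= in oA oT *.
rewrite norm21_sq /=.
have oAx := oA _ (ex_intro _ x (conj Dx erefl)).
have oAy := oA _ (ex_intro _ y (conj Dy erefl)).
have oTx := oT _ (ex_intro _ x (conj Dx erefl)).
have oTy := oT _ (ex_intro _ y (conj Dy erefl)).
rewrite /dot21 /= in oAx oAy oTx oTy.
have hz2 : hnorm z1 ^+ 2 + hnorm z2 ^+ 2 <= 1.
  by rewrite -(norm21_sq (z1, z2)) -[1](expr1n _ 2) ler_sqr ?nnegrE ?sqrtr_ge0.
have pyA : hnorm z1 ^+ 2 + hnorm z2 ^+ 2 =
   (hnorm (z1 - (S x + T x)) ^+ 2 + hnorm (z2 - x) ^+ 2) + (hnorm (S x + T x) ^+ 2 + hnorm x ^+ 2).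
  have e1 : z1 = (z1 - (S x + T x)) + (S x + T x) by rewrite subrK.
  have e2 : z2 = (z2 - x) + x by rewrite subrK.
  rewrite {1}e1 {1}e2 !normD2.
  have : complex.Re (hdot (z1 - (S x + T x)) (S x + T x) + hdot (z2 - x) x) = 0 by rewrite oAx.
  rewrite ReD => h0. lra.
have pyT : hnorm z1 ^+ 2 + hnorm z2 ^+ 2 =
   (hnorm (z1 - T y) ^+ 2 + hnorm (z2 - y) ^+ 2) + (hnorm (T y) ^+ 2 + hnorm y ^+ 2).
  have e1 : z1 = (z1 - T y) + T y by rewrite subrK.
  have e2 : z2 = (z2 - y) + y by rewrite subrK.
  rewrite {1}e1 {1}e2 !normD2.
  have : complex.Re (hdot (z1 - T y) (T y) + hdot (z2 - y) y) = 0 by rewrite oTy.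
  rewrite ReD => h0. lra.
have bx : hnorm x <= 1.
  apply: sq_le; rewrite ?hnorm_ge0 // expr1n.
  have := sqr_ge0 (hnorm (z1 - (S x + T x))); have := sqr_ge0 (hnorm (z2 - x)).
  have := sqr_ge0 (hnorm (S x + T x)). lra.
have by1 : hnorm y <= 1.
  apply: sq_le; rewrite ?hnorm_ge0 // expr1n.
  have := sqr_ge0 (hnorm (z1 - T y)); have := sqr_ge0 (hnorm (z2 - y)).
  have := sqr_ge0 (hnorm (T y)). lra.
have ba : hnorm (z1 - (S x + T x)) <= 1.
  apply: sq_le; rewrite ?hnorm_ge0 // expr1n.
  have := sqr_ge0 (hnorm (S x + T x)); have := sqr_ge0 (hnorm (z2 - x)).
  have := sqr_ge0 (hnorm x). lra.
have bb : hnorm (z1 - T y) <= 1.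
  apply: sq_le; rewrite ?hnorm_ge0 // expr1n.
  have := sqr_ge0 (hnorm (T y)); have := sqr_ge0 (hnorm (z2 - y)).
  have := sqr_ge0 (hnorm y). lra.
have id1 := dot_ident z1 (S x + T x) (T y).
have id2 := dot_ident z2 x y.
have key : hnorm (S x + T x - T y) ^+ 2 + hnorm (x - y) ^+ 2 =
   complex.Re (hdot (z1 - T y) (S x)) - complex.Re (hdot (z1 - (S x + T x)) (S y)).
  rewrite !hnorm2 -ReD id1 id2.
  have E1 : hdot (z1 - T y) (S x + T x) + hdot (z2 - y) x = hdot (z1 - T y) (S x).
    by rewrite dotDr -addrA oTx addr0.
  have E2 : hdot (z1 - (S x + T x)) (T y) + hdot (z2 - x) y = - hdot (z1 - (S x + T x)) (S y).
    have : hdot (z1 - (S x + T x)) (S y + T y) + hdot (z2 - x) y = 0 by [].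
    rewrite dotDr => h; apply/eqP; rewrite -subr_eq0 opprK -h; apply/eqP; ring.
  have -> : hdot (z1 - T y) (S x + T x) + hdot (z1 - (S x + T x)) (T y) -
      hdot (z1 - (S x + T x)) (S x + T x) - hdot (z1 - T y) (T y) +
      (hdot (z2 - y) x + hdot (z2 - x) y - hdot (z2 - x) x - hdot (z2 - y) y)
    = (hdot (z1 - T y) (S x + T x) + hdot (z2 - y) x) + (hdot (z1 - (S x + T x)) (T y) + hdot (z2 - x) y)
      - (hdot (z1 - (S x + T x)) (S x + T x) + hdot (z2 - x) x) - (hdot (z1 - T y) (T y) + hdot (z2 - y) y).
    by ring.
  by rewrite E1 E2 oAx oTy !subr0 ReD ReN.
rewrite key.
have c1 := CS_Re_abs (z1 - T y) (S x).
have c2 := CS_Re_abs (z1 - (S x + T x)) (S y).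
have s1 := hS x; have s2 := hS y.
have n1 := hnorm_ge0 (z1 - T y); have n2 := hnorm_ge0 (z1 - (S x + T x)).
have n3 := hnorm_ge0 (S x); have n4 := hnorm_ge0 (S y).
have hx := hnorm_ge0 x; have hy := hnorm_ge0 y.
have t1 : hnorm (z1 - T y) * hnorm (S x) <= c.
  apply: (le_trans (ler_pM n1 n3 bb s1)); rewrite mul1r; nra.
have t2 : hnorm (z1 - (S x + T x)) * hnorm (S y) <= c.
  apply: (le_trans (ler_pM n2 n4 ba s2)); rewrite mul1r; nra.
move: c1 c2; rewrite !ler_norml => /andP[_ c1] /andP[c2 _].
lra.
Qed.
End Gap.
Section Extra.
Context {R : realType}.
Local Open Scope complex_scope. Local Open Scope ring_scope.
Lemma realCB (a b : R) : (a - b)%:C = a%:C - b%:C.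
Proof. by apply/eqP; rewrite eq_complex /= subrr !eqxx. Qed.
Lemma unit_norm {H : hilbert R} (x : H) : x != 0 -> hnorm (((hnorm x)^-1)%:C *: x) = 1.
Proof.
move=> hx.
have hn : hnorm x != 0 by apply/eqP => /hnorm_eq0 /eqP; rewrite (negbTE hx).
by rewrite normZr ger0_norm ?invr_ge0 ?hnorm_ge0 // mulVf.
Qed.
Lemma Sbound {H1 H2 : hilbert R} (x0 x : H1) (w : H2) : hnorm x0 = 1 ->
  hnorm (hdot x x0 *: w) <= hnorm w * hnorm x.
Proof.
move=> n1; rewrite normZ mulrC ler_wpM2l ?hnorm_ge0 //.
apply: sq_le; rewrite ?sqrtr_ge0 ?hnorm_ge0 // sqr_sqrtr ?nc_ge0 //.
by have := CS x x0; rewrite n1 expr1n mulr1.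
Qed.
End Extra.
Theorem theorem3p5 (R : realType) (H1 H2 : hilbert R) (D : set H1) (T : H1 -> H2) :
  infinite_dimensional H1 -> infinite_dimensional H2 ->
  densely_defined_closed D T ->
  forall eps : R, 0 < eps ->
  exists S : H1 -> H2,
    [/\ bounded_operator S, op_norm S <= eps,
        minimum_attaining D (fun x => S x + T x),
        gap D (fun x => S x + T x) D T <= eps &
        (0 < min_modulus D T -> rank_one S)].
Proof.
move=> hinf _ hT eps heps.
case: hT => [[D0 Dlin] Tlin Ddense _].
have T0 : T 0 = 0.
  have h := Tlin 1 0 0 D0 D0; rewrite scale1r addr0 scale1r in h.
  by apply: (addrI (T 0)); rewrite addr0 -h.
have TZ : forall a x, D x -> T (a *: x) = a *: T x.
  by move=> a x Dx; have := Tlin a x 0 Dx D0; rewrite !addr0 T0 addr0.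
have DZ : forall a x, D x -> D (a *: x).
  by move=> a x Dx; rewrite -[_ *: _]addr0; apply: Dlin.
have DB : forall x y, D x -> D y -> D (x - y).
  by move=> x y Dx Dy; rewrite addrC -scaleN1r; apply: Dlin.
have TB : forall x y, D x -> D y -> T (x - y) = T x - T y.
  move=> x y Dx Dy; rewrite addrC -scaleN1r Tlin // scaleN1r addrC //.
have [e0 [De0 ne0]] : exists e0, D e0 /\ hnorm e0 = 1.
  have [f hf] := hinf 1%N.
  have f0 : f ord0 != 0.
    apply/eqP => h0.
    have := hf (fun _ => 1); rewrite big_ord1 scale1r h0 => /(_ erefl ord0) /eqP.
    by rewrite oner_eq0.
  have hpos : 0 < hnorm (f ord0).
    rewrite lt_def hnorm_ge0 andbT; apply/eqP => /hnorm_eq0 /eqP; by rewrite (negbTE f0).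
  have [d0 [Dd hd]] := Ddense (f ord0) _ hpos.
  have d0nz : d0 != 0.
    by apply/eqP => h0; move: hd; rewrite h0 subr0 ltxx.
  exists (((hnorm d0)^-1)%:C%C *: d0); split; first exact: DZ.
  exact: unit_norm.
set ET := [set r | exists x, D x /\ hnorm x = 1 /\ r = hnorm (T x)].
have mdef : min_modulus D T = inf ET by [].
have ET0 : ET !=set0 by exists (hnorm (T e0)); exists e0.
have ETlb : has_lbound ET by exists 0 => r [x [_ [_ ->]]]; exact: hnorm_ge0.
set m := inf ET.
have m_ge0 : 0 <= m by apply: lb_le_inf => // r [x [_ [_ ->]]]; exact: hnorm_ge0.
have lowT : forall x, D x -> m * hnorm x <= hnorm (T x).
  move=> x Dx.
  have [->|hx] := eqVneq x 0; first by rewrite T0 hnorm0 hnorm0 mulr0.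
  have hn : 0 < hnorm x.
    rewrite lt_def hnorm_ge0 andbT; apply/eqP => /hnorm_eq0 /eqP; by rewrite (negbTE hx).
  have h := ge_inf ETlb (ex_intro _ _ (conj (DZ ((hnorm x)^-1)%:C%C x Dx) (conj (unit_norm _ hx) erefl))).
  rewrite TZ // normZr ger0_norm ?invr_ge0 ?hnorm_ge0 // mulrC in h.
  by rewrite -ler_pdivlMr.
set e1 := Num.min eps (eps ^+ 2 / 2%:R).
have e1_gt0 : 0 < e1 by rewrite lt_min heps divr_gt0 // exprn_gt0.
have e1_le : e1 <= eps by rewrite ge_min lexx.
have e1_le2 : e1 <= eps ^+ 2 / 2%:R by rewrite ge_min lexx orbT.
set eta0 := Num.min (2^-1 : R) (e1 / (2%:R * (m + 1))).
have m1 : 0 < m + 1 by apply: ltr_wpDl m_ge0 ltr01.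
have eta0_gt0 : 0 < eta0 by rewrite lt_min invr_gt0 ltr0n divr_gt0 // mulr_gt0.
have eta0_le1 : eta0 <= 1.
  by rewrite ge_min invf_le1 ?ltr0n ?ler1n.
have eta0_m : eta0 * m <= e1 / 2%:R.
  have hmin : eta0 <= e1 / (2%:R * (m + 1)) by rewrite ge_min lexx orbT.
  apply: (le_trans (ler_wpM2r m_ge0 hmin)).
  have e : e1 / 2%:R - e1 / (2%:R * (m + 1)) * m = e1 / (2%:R * (m + 1)).
    field. by rewrite lt0r_neq0.
  by rewrite -subr_ge0 e; apply: divr_ge0; [exact: ltW | apply: mulr_ge0; [exact: ler0n | exact: ltW]].
have hlt : inf ET < Num.sqrt (m ^+ 2 + e1 ^+ 2 / 2%:R).
  apply: sq_lt => //; first exact: sqrtr_ge0.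
  rewrite sqr_sqrtr ?addr_ge0 ?sqr_ge0 ?divr_ge0 ?sqr_ge0 ?ler0n //.
  by rewrite -/m ltrDl divr_gt0 // exprn_gt0.
have [r [x0 [Dx0 [nx0 ->]]] hr] := inf_lt ET0 hlt.
set t := hnorm (T x0).
have ht2 : t ^+ 2 < m ^+ 2 + e1 ^+ 2 / 2%:R.
  rewrite -(sqr_sqrtr (a := m ^+ 2 + e1 ^+ 2 / 2%:R)) ?addr_ge0 ?sqr_ge0 ?divr_ge0 ?sqr_ge0 ?ler0n //.
  by rewrite ltr_sqr ?nnegrE ?hnorm_ge0 ?sqrtr_ge0.
have dx0 : hdot x0 x0 = 1 by rewrite dotxx nx0 expr1n.
set M := [set u | exists y, D y /\ hdot y x0 = 0 /\ u = T y].
have M0 : M 0 by exists 0; rewrite dot0l T0.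
have Mlin : forall (a : R[i]) u v, M u -> M v -> M (a *: u + v).
  move=> a u v [y1 [Dy1 [h1 ->]]] [y2 [Dy2 [h2 ->]]].
  exists (a *: y1 + y2); split; first exact: Dlin.
  by rewrite hdotDl h1 h2 mulr0 addr0 Tlin.
have [p [papp port]] := proj_thm M (T x0) M0 Mlin.
set v := T x0 - p.
set d := hnorm v.
have d_ge0 : 0 <= d by exact: hnorm_ge0.
have Re_vp : complex.Re (hdot v p) = 0.
  have habs : `|complex.Re (hdot v p)| <= 0.
    apply/ler_addgt0Pr => e he; rewrite add0r.
    have d1 : 0 < d + 1 by apply: ltr_wpDl d_ge0 ltr01.
    have [u [Mu hu]] := papp (e / (d + 1)) (divr_gt0 he d1).
    have e2 : hdot v p = hdot v (p - u) by rewrite dotBr (port u Mu) subr0.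
    rewrite e2; apply: (le_trans (CS_Re_abs _ _)).
    have : d * hnorm (p - u) <= d * (e / (d + 1)) by rewrite ler_wpM2l // ltW.
    have : d * (e / (d + 1)) <= e.
      have ee : e - d * (e / (d + 1)) = e / (d + 1) by field; rewrite lt0r_neq0.
      by rewrite -subr_ge0 ee divr_ge0 // ltW.
    rewrite -/d; lra.
  by apply/eqP; rewrite -normr_le0.
have d_ge_m : m <= d.
  apply/ler_addgt0Pr => e he.
  have [u [[y [Dy [hy ->]]] hu]] := papp e he.
  have hxy : 1 <= hnorm (x0 - y).
    apply: sq_le; rewrite ?ler01 ?hnorm_ge0 // expr1n normB2 nx0 expr1n Re_dotC hy /=.
    by rewrite mulr0 subr0 lerDl sqr_ge0.
  have h1 := lowT _ (DB _ _ Dx0 Dy).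
  rewrite TB // in h1.
  have h2 := hnorm_sub_tri (T x0) p (T y).
  have : m <= m * hnorm (x0 - y) by rewrite -{1}[m]mulr1 ler_wpM2l.
  rewrite -/v -/d in h2. lra.
have pyth : t ^+ 2 = d ^+ 2 + hnorm p ^+ 2.
  by rewrite /t -(subrK p (T x0)) -/v normD2 Re_vp mulr0 addr0.
have d_le_t : d <= t.
  apply: sq_le; rewrite ?hnorm_ge0 // pyth lerDl sqr_ge0 //.
pose k (eta : R) := (1 - eta) * m / d.
pose w (eta : R) := (k eta)%:C%C *: v - T x0.
have kd : forall eta, k eta * d = (1 - eta) * m.
  move=> eta; have [d0|d0] := eqVneq d 0.
    have m0 : m = 0 by apply/le_anti; rewrite m_ge0 -d0 d_ge_m.
    by rewrite d0 m0 !mulr0.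
  by rewrite /k divfK.
have k_ge0 : forall eta, eta <= 1 -> 0 <= k eta.
  by move=> eta he; rewrite /k divr_ge0 // mulr_ge0 // subr_ge0.
have norm_vv : forall eta, eta <= 1 -> hnorm ((k eta)%:C%C *: v) = (1 - eta) * m.
  by move=> eta he; rewrite normZr ger0_norm ?k_ge0 // kd.
have orth_vv : forall eta u, M u -> hdot ((k eta)%:C%C *: v) u = 0.
  by move=> eta u Mu; rewrite dotZl port // mulr0.
have w_bound : forall eta, 0 <= eta -> eta <= 1 ->
    hnorm (w eta) ^+ 2 <= t ^+ 2 - m ^+ 2 + (eta * m) ^+ 2.
  move=> eta he0 he1.
  have ew : w eta = (k eta - 1)%:C%C *: v - p.
    rewrite /w realCB scalerBl scale1r /v.
    by rewrite -addrA -opprD subrK.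
  rewrite ew normB2 normZ2 ncC dotZl ReCM Re_vp mulr0 mulr0 subr0.
  have : hnorm p ^+ 2 = t ^+ 2 - d ^+ 2 by rewrite pyth addrC addKr.
  move=> ->.
  have e2 : (k eta - 1) ^+ 2 * d ^+ 2 = (k eta * d - d) ^+ 2 by ring.
  rewrite -/d e2 kd.
  have h1 : 0 <= (1 - eta) * m by rewrite mulr_ge0 // subr_ge0.
  have h2 : (1 - eta) * m * m <= (1 - eta) * m * d by rewrite ler_wpM2l.
  nra.
have [eta [he0 he1 hem hw]] : exists eta, [/\ 0 <= eta, eta <= 1, eta * m <= e1 / 2%:R &
     (0 < m -> w eta != 0)].
  have [hw0|hw0] := eqVneq (w 0) 0; last first.
    exists 0; split => //; first by rewrite mul0r divr_ge0 // ltW.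
  exists eta0; split => //; first exact: ltW.
  move=> mpos.
  have dpos : 0 < d by apply: lt_le_trans d_ge_m.
  have -> : w eta0 = (k eta0 - k 0)%:C%C *: v.
    by rewrite realCB scalerBl -[LHS]subr0 -hw0 /w opprB addrA subrK.
  rewrite scaler_eq0 negb_or; apply/andP; split.
    apply/negP => /eqP /complexI /eqP; rewrite subr_eq0 /k subr0 => /eqP h.
    have hd0 : d != 0 by rewrite lt0r_neq0.
    have : (1 - eta0) * m = m.
      by have := congr1 (fun z => z * d) h; rewrite /= !divfK // mul1r.
    rewrite mulrBl mul1r => h2.
    have : eta0 * m = 0 by lra.
    move/eqP; rewrite mulf_eq0 => /orP[] /eqP h3.
      by move: eta0_gt0; rewrite h3 ltxx.
    by move: mpos; rewrite h3 ltxx.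
  by apply/eqP => hv; move: dpos; rewrite /d hv hnorm0 ltxx.
set w0 := w eta.
set S := fun x => hdot x x0 *: w0.
have w_le : hnorm w0 <= e1.
  apply: sq_le; [exact: hnorm_ge0 | exact: ltW |].
  apply: (le_trans (w_bound eta he0 he1)).
  have hm0 : 0 <= eta * m by rewrite mulr_ge0.
  nra.
have w_le2 : 2 * hnorm w0 <= eps ^+ 2.
  have := e1_le2; have := w_le; lra.
have hS : forall x, hnorm (S x) <= hnorm w0 * hnorm x by move=> x; exact: Sbound.
have Sx0 : S x0 + T x0 = (k eta)%:C%C *: v by rewrite /S dx0 scale1r /w0 /w subrK.
exists S; split.
- split; first by move=> a x y; rewrite /S hdotDl scalerDl scalerA.
  by exists (hnorm w0).
- rewrite /op_norm; apply: ge_sup.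
    by exists (hnorm (S 0)); exists 0; rewrite hnorm0 ler01.
  move=> r' [x [hx ->]].
  apply: (le_trans (hS x)); apply: (le_trans _ e1_le); apply: (le_trans _ w_le).
  by rewrite -{2}[hnorm w0]mulr1 ler_wpM2l ?hnorm_ge0.
- exists x0; split => //; split => //.
  set EA := [set r | exists x, D x /\ hnorm x = 1 /\ r = hnorm (S x + T x)].
  have EAlb : has_lbound EA by exists 0 => r' [x [_ [_ ->]]]; exact: hnorm_ge0.
  have EA0 : EA !=set0 by exists (hnorm (S x0 + T x0)); exists x0.
  rewrite /min_modulus -/EA; apply: le_anti; apply/andP; split.
    apply: lb_le_inf => // r' [x [Dx [nx ->]]].
    rewrite Sx0 norm_vv //.
    set a := hdot x x0.
    set y := x - a *: x0.
    have Dy : D y by apply: DB => //; exact: DZ.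
    have hy0 : hdot y x0 = 0 by rewrite /y dotBl dotZl dx0 mulr1 subrr.
    have ex : x = a *: x0 + y by rewrite /y addrC subrK.
    have eA : S x + T x = a *: ((k eta)%:C%C *: v) + T y.
      rewrite {2}ex Tlin // /S -/a addrA -scalerDr /w0 /w subrK //.
    have MTy : M (T y) by exists y.
    have hx1 : 1 = nc a + hnorm y ^+ 2.
      have := nx0; have := nx.
      rewrite {1}ex => hh _.
      have : hnorm (a *: x0 + y) ^+ 2 = 1 by rewrite hh expr1n.
      rewrite normD2 normZ2 nx0 expr1n mulr1 dotZl.
      rewrite (hdotC y x0) hy0 rmorph0 mulr0 /= mulr0 addr0 => <-.
      by [].
    apply: sq_le; rewrite ?hnorm_ge0 ?mulr_ge0 ?subr_ge0 //.
    rewrite eA normD2 normZ2 dotZl orth_vv // mulr0 /= mulr0 addr0 norm_vv //.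
    have hTy := lowT _ Dy.
    have hTy2 : (m * hnorm y) ^+ 2 <= hnorm (T y) ^+ 2.
      by rewrite ler_sqr ?nnegrE ?mulr_ge0 ?hnorm_ge0.
    have hmu : ((1 - eta) * m) ^+ 2 <= m ^+ 2.
      rewrite ler_sqr ?nnegrE ?mulr_ge0 ?subr_ge0 //.
      by rewrite ler_piMl // lerBlDr lerDl.
    have hna := nc_ge0 a.
    have hy2 := sqr_ge0 (hnorm y).
    nra.
  apply: ge_inf => //; exists x0; split => //; split => //.
- rewrite /gap; apply: ge_sup.
    exists (norm21 (sub21 ((0 : H2), (0 : H1)) (0, 0))).
    exists (0, 0), (0, 0), (0, 0); split.
    + by rewrite /norm21 /= hnorm0 hnorm0 expr0n addr0 sqrtr0 ler01.
    + split; first by exists 0; split => //; rewrite /S dot0l scale0r T0 addr0.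
      by move=> w' _; rewrite /dot21 /sub21 /= !subrr !dot0l addr0.
    + split; first by exists 0; split => //; rewrite T0.
      by move=> w' _; rewrite /dot21 /sub21 /= !subrr !dot0l addr0.
    + by [].
  move=> r' [z [p' [q' [hz hp hq ->]]]].
  have h := gap_sq D S T (hnorm w0) (hnorm_ge0 w0) hS z p' q' hz hp hq.
  apply: sq_le; [exact: sqrtr_ge0 | exact: ltW |].
  exact: (le_trans h w_le2).
- move=> mpos; exists w0; split; first by apply/eqP; apply: hw.
  split; first by move=> x; exists (hdot x x0).
  by exists x0; rewrite /S dx0 scale1r; apply/eqP; apply: hw.
Qed.
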